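(* Let $\mathsf{K}$ be a universal class of $\mathcal{L}$-algebras. If $\mathsf{K}$ has the amalgamation property, the variable projection property, and the conservative model extension property, then $\mathrm{Th}(\mathsf{K})$ has a model completion.
   Context: $\mathcal{L}$ is an algebraic first-order language (no relation symbols) with at least one constant symbol. Equations are atomic formulas; literals are equations and negated equations. $\mathsf{K}\models\alpha$ (for quantifier-free $\alpha$) means every member of $\mathsf{K}$ satisfies $\alpha$ under every assignment. For a conjunction of literals $\psi$, $\psi^+$ is the conjunction of the equations occurring positively in $\psi$. $\alpha(\overline{x})$ means the free variables of $\alpha$ lie in $\overline{x}$; $\overline{x},y$ is a finite set $\overline{x}$ plus a variable $y\notin\overline{x}$. A universal class is closed under isomorphic images, subalgebras and ultraproducts. A model completion of a theory $T$ is a model complete theory $T^*$ with the same universal consequences as $T$ such that for every model $M$ of $T$, $T^*$ plus the diagram of $M$ is complete. Amalgamation property: for $\mathbf{A},\mathbf{B},\mathbf{C}\in\mathsf{K}$ and embeddings $f\colon\mathbf{A}\to\mathbf{B}$, $g\colon\mathbf{A}\to\mathbf{C}$ there are $\mathbf{D}\in\mathsf{K}$ and embeddings $h,k$ with $hf=kg$. Variable projection property: for any finite $\overline{x},y$ and conjunction of equations $\varphi(\overline{x},y)$ there is a quantifier-free $\xi(\overline{x})$ with $\mathsf{K}\models\varphi\to\xi$ and, for every equation $\varepsilon(\overline{x})$, $\mathsf{K}\models\varphi\to\varepsilon$ implies $\mathsf{K}\models\xi\to\varepsilon$. Conservative model extension property: for any finite $\overline{x},y$ and conjunction of literals $\psi(\overline{x},y)$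 there is a quantifier-free $\chi(\overline{x})$ with (i) $\mathsf{K}\models\psi\to\chi$ and (ii) for every $\mathbf{A}\in\mathsf{K}$ generated by $\overline{a}\in A^{\overline{x}}$ with $\mathbf{A}\models\chi(\overline{a})$ and $\mathbf{A}\models\varepsilon(\overline{a})$ for every equation $\varepsilon(\overline{x})$ with $\mathsf{K}\models\psi^+\to\varepsilon$, there exist $\mathbf{B}\in\mathsf{K}$ extending $\mathbf{A}$ and $b\in B$ with $\mathbf{B}\models\psi(\overline{a},b)$. *)

(* Defs.v *)
From mathcomp Require Import all_boot.
Set Implicit Arguments. Unset Strict Implicit. Unset Printing Implicit Defensive.

Record language := Language { fsym : Type; arity : fsym -> nat }.

Definition has_constant (L : language) : Prop := exists c : fsym L, arity c = 0.

Section Syntax.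
Variable L : language.

Inductive term : Type :=
| Var : nat -> term
| App : forall f : fsym L, ('I_(arity f) -> term) -> term.

Inductive formula : Type :=
| Fls : formula
| Eqn : term -> term -> formula
| Neg : formula -> formula
| Conj : formula -> formula -> formula
| Disj : formula -> formula -> formula
| Imp : formula -> formula -> formula
| Ex : nat -> formula -> formula
| All : nat -> formula -> formula.

Definition Tru : formula := Neg Fls.

Fixpoint term_in (P : nat -> Prop) (t : term) : Prop :=
  match t with
  | Var n => P n
  | App f args => forall i, term_in P (args i)
  end.

Fixpoint fml_in (P : nat -> Prop) (phi : formula) : Prop :=
  match phi with
  | Fls => True
  | Eqn t1 t2 => term_in P t1 /\ term_in P t2
  | Neg p => fml_in P p
  | Conj p q | Disj p q | Imp p q => fml_in P p /\ fml_in P q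
  | Ex x p | All x p => fml_in (fun n => n = x \/ P n) p
  end.

Definition sentence (phi : formula) : Prop := fml_in (fun _ => False) phi.

Fixpoint qfree (phi : formula) : Prop :=
  match phi with
  | Fls | Eqn _ _ => True
  | Neg p => qfree p
  | Conj p q | Disj p q | Imp p q => qfree p /\ qfree q
  | Ex _ _ | All _ _ => False
  end.

Inductive universal : formula -> Prop :=
| univ_qf phi : qfree phi -> universal phi
| univ_all x phi : universal phi -> universal (All x phi).

(** An equation is a pair of terms; a literal is a signed equation
    (true = positive). Conjunctions are finite lists. *)
Definition equation := (term * term)%type.
Definition literal := (bool * equation)%type.

Definition eq_fml (e : equation) : formula := Eqn e.1 e.2.
Definition lit_fml (l : literal) : formula :=
  if l.1 then eq_fml l.2 else Neg (eq_fml l.2).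

Definition big_conj (s : seq formula) : formula := foldr Conj Tru s.
Definition conj_eqs (s : seq equation) : formula := big_conj (map eq_fml s).
Definition conj_lits (s : seq literal) : formula := big_conj (map lit_fml s).
Definition pos_part (s : seq literal) : seq equation :=
  [seq l.2 | l <- s & l.1].

End Syntax.

Arguments Var {L}.

Record algebra (L : language) := Algebra {
  carrier :> Type;
  interp : forall f : fsym L, ('I_(arity f) -> carrier) -> carrier }.
Arguments interp {L} a f args.

Section Semantics.
Variable L : language.

Fixpoint eval (A : algebra L) (v : nat -> A) (t : term L) : A :=
  match t with
  | Var n => v n
  | App f args => interp A f (fun i => eval v (args i))
  end.

Definition upd (A : Type) (v : nat -> A) (x : nat) (a : A) : nat -> A :=
  fun n => if n == x then a else v n.

Fixpoint sat (A : algebra L) (v : nat -> A) (phi : formula L) : Prop :=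
  match phi with
  | Fls => False
  | Eqn t1 t2 => eval v t1 = eval v t2
  | Neg p => ~ sat v p
  | Conj p q => sat v p /\ sat v q
  | Disj p q => sat v p \/ sat v q
  | Imp p q => sat v p -> sat v q
  | Ex x p => exists a : A, sat (upd v x a) p
  | All x p => forall a : A, sat (upd v x a) p
  end.

Definition holds (A : algebra L) (phi : formula L) : Prop :=
  forall v : nat -> A, sat v phi.

Definition is_hom (A B : algebra L) (e : A -> B) : Prop :=
  forall (f : fsym L) (args : 'I_(arity f) -> A),
    e (interp A f args) = interp B f (fun i => e (args i)).

Definition is_embedding (A B : algebra L) (e : A -> B) : Prop :=
  (forall a1 a2, e a1 = e a2 -> a1 = a2) /\ is_hom e.

Definition is_iso (A B : algebra L) (e : A -> B) : Prop :=
  is_embedding e /\ (forall b, exists a, e a = b).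

Definition is_elementary (A B : algebra L) (e : A -> B) : Prop :=
  is_embedding e /\
  forall (phi : formula L) (v : nat -> A), sat v phi <-> sat (fun n => e (v n)) phi.

Definition ultrafilter (I : Type) (U : (I -> Prop) -> Prop) : Prop :=
  [/\ U (fun _ => True), ~ U (fun _ => False),
      (forall S T : I -> Prop, U S -> (forall i, S i -> T i) -> U T),
      (forall S T : I -> Prop, U S -> U T -> U (fun i => S i /\ T i))
    & (forall S : I -> Prop, U S \/ U (fun i => ~ S i))].

(** B is (isomorphic to) the ultraproduct of the family A over U: there is a
    surjective homomorphism from the direct product onto B whose kernel is the
    U-almost-everywhere equality. *)
Definition is_ultraproduct (I : Type) (A : I -> algebra L)
    (U : (I -> Prop) -> Prop) (B : algebra L) : Prop :=
  exists pi : (forall i, A i) -> B,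
    [/\ (forall b, exists x, pi x = b),
        (forall (f : fsym L) (xs : 'I_(arity f) -> forall i, A i),
            pi (fun i => interp (A i) f (fun j => xs j i))
            = interp B f (fun j => pi (xs j)))
      & (forall x y, pi x = pi y <-> U (fun i => x i = y i))].

Definition iso_closed (K : algebra L -> Prop) : Prop :=
  forall (A B : algebra L) (e : A -> B), is_iso e -> K A -> K B.

(** Closure under subalgebras (stated via embeddings; together with
    closure under isomorphic images this is closure under subalgebras). *)
Definition sub_closed (K : algebra L -> Prop) : Prop :=
  forall (A B : algebra L) (e : A -> B), is_embedding e -> K B -> K A.

Definition ultraprod_closed (K : algebra L -> Prop) : Prop :=
  forall (I : Type) (A : I -> algebra L) (U : (I -> Prop) -> Prop) (B : algebra L),
    ultrafilter U -> (forall i, K (A i)) -> is_ultraproduct A U B -> K B.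

Definition universal_class (K : algebra L -> Prop) : Prop :=
  [/\ iso_closed K, sub_closed K & ultraprod_closed K].

Definition Kmodels (K : algebra L -> Prop) (alpha : formula L) : Prop :=
  forall A : algebra L, K A -> holds A alpha.

Definition in_vars (xs : seq nat) : nat -> Prop := fun n => n \in xs.
Definition in_vars_y (xs : seq nat) (y : nat) : nat -> Prop :=
  fun n => n \in xs \/ n = y.

Definition amalgamation (K : algebra L -> Prop) : Prop :=
  forall (A B C : algebra L) (f : A -> B) (g : A -> C),
    K A -> K B -> K C -> is_embedding f -> is_embedding g ->
    exists (D : algebra L) (h : B -> D) (k : C -> D),
      [/\ K D, is_embedding h, is_embedding k
        & forall a, h (f a) = k (g a)].

Definition var_projection (K : algebra L -> Prop) : Prop :=
  forall (xs : seq nat) (y : nat) (phi : seq (equation L)),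
    y \notin xs ->
    fml_in (in_vars_y xs y) (conj_eqs phi) ->
    exists xi : formula L,
      [/\ qfree xi, fml_in (in_vars xs) xi,
          Kmodels K (Imp (conj_eqs phi) xi)
        & forall eps : equation L,
            fml_in (in_vars xs) (eq_fml eps) ->
            Kmodels K (Imp (conj_eqs phi) (eq_fml eps)) ->
            Kmodels K (Imp xi (eq_fml eps))].

Definition generated_by (A : algebra L) (xs : seq nat) (a : nat -> A) : Prop :=
  forall c : A, exists t : term L, term_in (in_vars xs) t /\ eval a t = c.

Definition cons_model_ext (K : algebra L -> Prop) : Prop :=
  forall (xs : seq nat) (y : nat) (psi : seq (literal L)),
    y \notin xs ->
    fml_in (in_vars_y xs y) (conj_lits psi) ->
    exists chi : formula L,
      [/\ qfree chi, fml_in (in_vars xs) chi,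
          Kmodels K (Imp (conj_lits psi) chi)
        & forall (A : algebra L) (a : nat -> A),
            K A -> generated_by xs a -> sat a chi ->
            (forall eps : equation L,
                fml_in (in_vars xs) (eq_fml eps) ->
                Kmodels K (Imp (conj_eqs (pos_part psi)) (eq_fml eps)) ->
                sat a (eq_fml eps)) ->
            exists (B : algebra L) (e : A -> B) (b : B),
              [/\ K B, is_embedding e
                & sat (upd (fun n => e (a n)) y b) (conj_lits psi)]].

Definition theory := formula L -> Prop.

Definition model (T : theory) (M : algebra L) : Prop :=
  forall phi, T phi -> holds M phi.

Definition consequence (T : theory) (phi : formula L) : Prop :=
  forall M : algebra L, model T M -> holds M phi.

Definition Th (K : algebra L -> Prop) : theory :=
  fun phi => sentence phi /\ Kmodels K phi.

Definition model_complete (T : theory) : Prop :=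
  forall (M N : algebra L) (e : M -> N),
    model T M -> model T N -> is_embedding e -> is_elementary e.

Definition same_universal_consequences (T T' : theory) : Prop :=
  forall phi, sentence phi -> universal phi ->
    (consequence T phi <-> consequence T' phi).

(** T' together with the (atomic) diagram of M is complete: its models are
    exactly the models N of T' with an embedding of M (interpreting the new
    constants); completeness = it is consistent and any two such models
    satisfy the same sentences of the expanded language, i.e. the same
    formulas with parameters from M. *)
Definition diagram_complete (T' : theory) (M : algebra L) : Prop :=
  (exists (N : algebra L) (e : M -> N), model T' N /\ is_embedding e) /\
  forall (N1 N2 : algebra L) (e1 : M -> N1) (e2 : M -> N2),
    model T' N1 -> model T' N2 -> is_embedding e1 -> is_embedding e2 ->
    forall (phi : formula L) (v : nat -> M),
      sat (fun n => e1 (v n)) phi <-> sat (fun n => e2 (v n)) phi.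

Definition model_completion (T T' : theory) : Prop :=
  [/\ (forall phi, T' phi -> sentence phi),
      model_complete T',
      same_universal_consequences T T'
    & forall M : algebra L, model T M -> diagram_complete T' M].

End Semantics.

(* Main.v *)
Require Import Defs.
From mathcomp Require Import all_boot.
From mathcomp Require Import boolp classical_sets filter.
From Stdlib Require List.
Set Implicit Arguments. Unset Strict Implicit. Unset Printing Implicit Defensive.

Section Basics.
Variable L : language.
Implicit Types (t : term L) (phi : formula L).

Lemma upd_same (A : Type) (v : nat -> A) x : upd v x (v x) = v.
Proof. by apply: funext => n; rewrite /upd; case: eqP => // ->. Qed.

Lemma comp_upd (A B : Type) (e : A -> B) (v : nat -> A) x a :
  (fun n => e (upd v x a n)) = upd (fun n => e (v n)) x (e a).
Proof. by apply: funext => n; rewrite /upd; case: ifP. Qed.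

Lemma term_in_mono (P Q : nat -> Prop) t :
  (forall n, P n -> Q n) -> term_in P t -> term_in Q t.
Proof.
elim: t => [n|f args IH] PQ /=; first exact: PQ.
by move=> H i; apply: IH.
Qed.

Lemma fml_in_mono phi : forall (P Q : nat -> Prop),
  (forall n, P n -> Q n) -> fml_in P phi -> fml_in Q phi.
Proof.
elim: phi => //=.
- move=> t1 t2 P Q PQ [H1 H2]; split; [exact: term_in_mono PQ H1|exact: term_in_mono PQ H2].
- move=> p IH1 q IH2 P Q PQ [H1 H2]; split; [exact: IH1 H1|exact: IH2 H2].
- move=> p IH1 q IH2 P Q PQ [H1 H2]; split; [exact: IH1 H1|exact: IH2 H2].
- move=> p IH1 q IH2 P Q PQ [H1 H2]; split; [exact: IH1 H1|exact: IH2 H2].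
- move=> x p IH P Q PQ; apply: IH => n [->|/PQ]; tauto.
- move=> x p IH P Q PQ; apply: IH => n [->|/PQ]; tauto.
Qed.

Lemma eval_fv (A : algebra L) (P : nat -> Prop) (v w : nat -> A) t :
  term_in P t -> (forall n, P n -> v n = w n) -> eval v t = eval w t.
Proof.
elim: t => [n|f args IH] /=; first by move=> Pn /(_ n Pn).
move=> H vw; congr (interp A f); apply: funext => i; exact: IH.
Qed.

Lemma sat_fv (A : algebra L) phi : forall (P : nat -> Prop) (v w : nat -> A),
  fml_in P phi -> (forall n, P n -> v n = w n) -> (sat v phi <-> sat w phi).
Proof.
elim: phi => /=.
- by [].
- move=> t1 t2 P v w [H1 H2] vw.
  by rewrite (eval_fv H1 vw) (eval_fv H2 vw).
- move=> p IH P v w H vw; by rewrite (IH P v w H vw).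
- move=> p IH1 q IH2 P v w [H1 H2] vw; by rewrite (IH1 P v w H1 vw) (IH2 P v w H2 vw).
- move=> p IH1 q IH2 P v w [H1 H2] vw; by rewrite (IH1 P v w H1 vw) (IH2 P v w H2 vw).
- move=> p IH1 q IH2 P v w [H1 H2] vw; by rewrite (IH1 P v w H1 vw) (IH2 P v w H2 vw).
- move=> x p IH P v w H vw; split=> -[a Ha]; exists a;
    (apply: (IH _ _ _ H _).1 Ha || apply: (IH _ _ _ H _).2 Ha);
    move=> n [->|Pn]; rewrite /upd; case: eqP => // _; by [apply: vw | symmetry; apply: vw].
- move=> x p IH P v w H vw; split=> Ha a;
    (apply: (IH _ _ _ H _).1 (Ha a) || apply: (IH _ _ _ H _).2 (Ha a));
    move=> n [->|Pn]; rewrite /upd; case: eqP => // _; by [apply: vw | symmetry; apply: vw].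
Qed.

Lemma eval_hom (A B : algebra L) (e : A -> B) (v : nat -> A) t :
  is_hom e -> eval (fun n => e (v n)) t = e (eval v t).
Proof.
move=> he; elim: t => [n|f args IH] //=.
by rewrite he; congr (interp B f); apply: funext => i; rewrite IH.
Qed.

Lemma sat_emb (A B : algebra L) (e : A -> B) (v : nat -> A) phi :
  is_embedding e -> qfree phi -> (sat (fun n => e (v n)) phi <-> sat v phi).
Proof.
move=> [ei he]; elim: phi v => //=.
- move=> t1 t2 v _; rewrite !eval_hom //; split; [exact: ei|by move=> ->].
- by move=> p IH v H; rewrite IH.
- by move=> p IH1 q IH2 v [H1 H2]; rewrite IH1 // IH2.
- by move=> p IH1 q IH2 v [H1 H2]; rewrite IH1 // IH2.
- by move=> p IH1 q IH2 v [H1 H2]; rewrite IH1 // IH2.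
Qed.

Lemma universal_down (A B : algebra L) (e : A -> B) phi :
  is_embedding e -> universal phi ->
  forall v : nat -> A, sat (fun n => e (v n)) phi -> sat v phi.
Proof.
move=> he; elim => [p qp|x p _ IH] v.
- by move/(sat_emb v he qp).
- move=> /= H a; apply: IH; rewrite comp_upd; exact: H.
Qed.

Lemma holds_down (A B : algebra L) (e : A -> B) phi :
  is_embedding e -> universal phi -> holds B phi -> holds A phi.
Proof. move=> he hu H v; exact: universal_down he hu v (H _). Qed.

Definition closeAll (xs : seq nat) phi : formula L := foldr (fun x p => All x p) phi xs.

Lemma sat_closeAll (A : algebra L) xs phi :
  (forall v : nat -> A, sat v (closeAll xs phi)) <-> (forall v : nat -> A, sat v phi).
Proof.
elim: xs => [|x xs IH] //=; split.
- move=> H; apply IH => v; rewrite -(upd_same v x); exact: H.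
- by move=> H v a; exact: (proj2 IH H).
Qed.

Lemma fml_in_closeAll xs phi (P : nat -> Prop) :
  fml_in (fun n => n \in xs \/ P n) phi -> fml_in P (closeAll xs phi).
Proof.
elim: xs P => [|x xs IH] P /=.
- by apply: fml_in_mono => n [].
- move=> H; apply: IH; apply: fml_in_mono H => n; rewrite inE; case: eqP => /=; tauto.
Qed.

Lemma universal_closeAll xs phi : qfree phi -> universal (closeAll xs phi).
Proof. by move=> H; elim: xs => [|x xs IH] /=; constructor. Qed.

End Basics.

Section Ultra.
Variable L : language.

Lemma ultra_exists (I J : Type) (Bs : J -> I -> Prop) (j0 : J) :
  (forall j k, exists l, forall i, Bs l i -> Bs j i /\ Bs k i) ->
  (forall j, exists i, Bs j i) ->
  exists U : (I -> Prop) -> Prop, ultrafilter U /\ forall j, U (Bs j).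
Proof.
move=> dir ne.
have FF : Filter (filter_from setT Bs).
  apply: filter_from_filter; first by exists j0.
  move=> j k _ _; have [l Hl] := dir j k; exists l => // i /Hl.
have PF : ProperFilter (filter_from setT Bs).
  apply: filter_from_proper => j _; have [i Hi] := ne j; by exists i.
have [G [GU sub]] := ultraFilterLemma PF.
exists G; split; last by move=> j; apply: sub; exists j.
have GF : ProperFilter G := @ultra_proper _ _ GU.
split.
- exact: filterT.
- exact: (filter_not_empty G).
- by move=> S T GS ST; apply: filterS GS.
- by move=> S T GS GT; apply: (filterI GS GT).
- by move=> S; case: (in_ultra_setVsetC S GU) => H; [left|right].
Qed.

Section UF.
Variables (I : Type) (U : (I -> Prop) -> Prop).
Hypothesis HU : ultrafilter U.

Lemma U_T : U (fun _ => True). Proof. by case: HU. Qed.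
Lemma U_nF : ~ U (fun _ => False). Proof. by case: HU. Qed.
Lemma U_mono (S T : I -> Prop) : U S -> (forall i, S i -> T i) -> U T.
Proof. by case: HU => _ _ H _ _; apply: H. Qed.
Lemma U_and (S T : I -> Prop) : U S -> U T -> U (fun i => S i /\ T i).
Proof. by case: HU => _ _ _ H _; apply: H. Qed.
Lemma U_or (S : I -> Prop) : U S \/ U (fun i => ~ S i).
Proof. by case: HU => _ _ _ _ H; apply: H. Qed.
Lemma U_ex (S : I -> Prop) : U S -> exists i, S i.
Proof.
move=> H; apply: contrapT => nE; apply: U_nF; apply: (U_mono H) => i Si.
by apply: nE; exists i.
Qed.
Lemma U_not (S : I -> Prop) : U (fun i => ~ S i) <-> ~ U S.
Proof.
split.
- move=> H1 H2; have := U_and H1 H2; move/U_ex => [i []]; tauto.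
- by case: (U_or S).
Qed.
Lemma U_fin n (P : 'I_n -> I -> Prop) :
  (forall j, U (P j)) -> U (fun i => forall j, P j i).
Proof.
elim: n P => [|n IH] P H.
  by apply: (U_mono U_T) => i _ [j Hj]; exfalso; move: Hj; rewrite ltn0.
have H1 := IH (fun j => P (lift ord0 j)) (fun j => H _).
apply: (U_mono (U_and (H ord0) H1)) => i [H0 Hl] j.
by case: (unliftP ord0 j) => [j' ->|->].
Qed.
End UF.

Section UP.
Variables (I : Type) (A : I -> algebra L) (U : (I -> Prop) -> Prop).
Hypothesis HU : ultrafilter U.

Definition ueq (x y : forall i, A i) : Prop := U (fun i => x i = y i).

Lemma ueq_refl x : ueq x x.
Proof. exact: (U_mono HU (U_T HU)). Qed.
Lemma ueq_sym x y : ueq x y -> ueq y x.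
Proof. by move=> H; apply: (U_mono HU H) => i ->. Qed.
Lemma ueq_trans x y z : ueq x y -> ueq y z -> ueq x z.
Proof. by move=> H1 H2; apply: (U_mono HU (U_and HU H1 H2)) => i [-> ->]. Qed.

Definition UPc : Type := {P : (forall i, A i) -> Prop | exists x, P = ueq x}.
Definition upi (x : forall i, A i) : UPc := exist _ (ueq x) (ex_intro _ x erefl).
Definition rep (b : UPc) : forall i, A i := proj1_sig (cid (proj2_sig b)).

Lemma exist_eqP (P Q : (forall i, A i) -> Prop) H1 H2 :
  P = Q -> exist (fun P => exists x, P = ueq x) P H1 = exist _ Q H2.
Proof. move=> E; subst; congr exist; exact: Prop_irrelevance. Qed.

Lemma upiK b : upi (rep b) = b.
Proof.
case: b => P H; rewrite /rep /=; case: (cid H) => x /= E.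
by apply: exist_eqP; rewrite E.
Qed.

Lemma upi_eq x y : upi x = upi y <-> ueq x y.
Proof.
split.
- move=> E; have : ueq x y = ueq y y by move: E => /(congr1 (@proj1_sig _ _)) /= ->.
  by move=> ->; apply: ueq_refl.
- move=> H; apply: exist_eqP; apply: funext => z; apply: propext; split.
  + by move=> H2; apply: ueq_trans (ueq_sym H) H2.
  + by move=> H2; apply: ueq_trans H H2.
Qed.

Definition UPi (f : Defs.fsym L) (args : 'I_(arity f) -> UPc) : UPc :=
  upi (fun i => interp (A i) f (fun j => rep (args j) i)).

Definition UPalg : algebra L := @Defs.Algebra L UPc UPi.

Lemma UP_hom (f : Defs.fsym L) (xs : 'I_(arity f) -> forall i, A i) :
  upi (fun i => interp (A i) f (fun j => xs j i)) = interp UPalg f (fun j => upi (xs j)).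
Proof.
rewrite /= /UPi; apply/upi_eq.
have H : forall j, U (fun i => xs j i = rep (upi (xs j)) i).
  by move=> j; apply/upi_eq; rewrite upiK.
apply: (U_mono HU (U_fin HU H)) => i Hi; congr (interp (A i) f).
by apply: funext => j; rewrite Hi.
Qed.

Lemma UP_is_ultraproduct : is_ultraproduct A U UPalg.
Proof.
exists upi; split.
- by move=> b; exists (rep b); exact: upiK.
- exact: UP_hom.
- move=> x y; exact: upi_eq.
Qed.
End UP.

Section Los.
Variables (I : Type) (A : I -> algebra L) (U : (I -> Prop) -> Prop) (B : algebra L).
Hypothesis HU : ultrafilter U.
Variable pi : (forall i, A i) -> B.
Hypothesis pi_hom : forall (f : Defs.fsym L) (xs : 'I_(arity f) -> forall i, A i),
            pi (fun i => interp (A i) f (fun j => xs j i))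
            = interp B f (fun j => pi (xs j)).
Hypothesis pi_eq : forall x y, pi x = pi y <-> U (fun i => x i = y i).

Lemma los_eval (v : forall i, nat -> A i) (t : term L) :
  eval (fun n => pi (fun i => v i n)) t = pi (fun i => eval (v i) t).
Proof.
elim: t => [n|f args IH] //=.
transitivity (interp B f (fun j => pi (fun i => eval (v i) (args j)))).
  by congr (interp B f); apply: funext => j; exact: IH.
by rewrite -pi_hom.
Qed.

Lemma los_qf (phi : formula L) (v : forall i, nat -> A i) :
  qfree phi -> (sat (fun n => pi (fun i => v i n)) phi <-> U (fun i => sat (v i) phi)).
Proof.
elim: phi => //=.
- move=> _; split=> // H; exact: (U_nF HU H).
- by move=> t1 t2 _; rewrite !los_eval pi_eq.
- move=> p IH qp; rewrite IH //; split; [exact: (U_not HU _).2|exact: (U_not HU _).1].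
- move=> p IH1 q IH2 [qp qq]; rewrite IH1 // IH2 //; split.
  + by move=> [H1 H2]; exact: (U_and HU).
  + by move=> H; split; apply: (U_mono HU H) => i [].
- move=> p IH1 q IH2 [qp qq]; rewrite IH1 // IH2 //; split.
  + by move=> [H|H]; apply: (U_mono HU H) => i; tauto.
  + move=> H; apply: contrapT => nH.
    have H1 : U (fun i => ~ sat (v i) p) by apply/U_not => // ?; apply: nH; left.
    have H2 : U (fun i => ~ sat (v i) q) by apply/U_not => // ?; apply: nH; right.
    have [i] := U_ex HU (U_and HU H (U_and HU H1 H2)); tauto.
- move=> p IH1 q IH2 [qp qq]; rewrite IH1 // IH2 //; split.
  + move=> H; case: (U_or HU (fun i => sat (v i) p)) => Hp.
    * by apply: (U_mono HU (U_and HU Hp (H Hp))) => i [].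
    * by apply: (U_mono HU Hp) => i.
  + move=> H Hp; by apply: (U_mono HU (U_and HU H Hp)) => i [/[apply]].
Qed.
End Los.

End Ultra.

Section Syn.
Variable L : language.
Implicit Types (t : term L) (phi : formula L) (s : seq (literal L)).

Fixpoint tvars t : seq nat :=
  match t with
  | Var n => [:: n]
  | App f args => flatten [seq tvars (args i) | i <- enum 'I_(arity f)]
  end.

Lemma term_in_tvars t : term_in (fun n => n \in tvars t) t.
Proof.
elim: t => [n|f args IH] /=; first by rewrite inE.
move=> i; apply: term_in_mono (IH i) => n Hn.
apply/flattenP; exists (tvars (args i)) => //; apply: map_f; exact: mem_enum.
Qed.

Definition lvars (l : literal L) : seq nat := tvars l.2.1 ++ tvars l.2.2.
Definition lsvars s : seq nat := flatten (map lvars s).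

Lemma fml_in_lits s : fml_in (fun n => n \in lsvars s) (conj_lits s).
Proof.
elim: s => [|[b [t1 t2]] s IH] //=; split.
- have H : fml_in (fun n => n \in lvars (b, (t1, t2)) ++ lsvars s) (Eqn t1 t2).
    split; apply: term_in_mono (term_in_tvars _) => n Hn;
    by rewrite /lvars /= !mem_cat Hn ?orbT.
  by move: H; rewrite /lit_fml; case: b.
- apply: fml_in_mono IH => n Hn; by rewrite mem_cat Hn orbT.
Qed.

Lemma sat_lits_cat (A : algebra L) (v : nat -> A) s1 s2 :
  sat v (conj_lits (s1 ++ s2)) <-> sat v (conj_lits s1) /\ sat v (conj_lits s2).
Proof. elim: s1 => [|l s1 IH] /=; [tauto|rewrite IH; tauto]. Qed.

Lemma sat_pos_part (A : algebra L) (v : nat -> A) s :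
  sat v (conj_lits s) -> sat v (conj_eqs (pos_part s)).
Proof.
elim: s => [|[[] e] s IH] //= [H1 H2]; last exact: IH.
by split => //; apply: IH.
Qed.

Lemma fml_in_pos_part (P : nat -> Prop) s :
  fml_in P (conj_lits s) -> fml_in P (conj_eqs (pos_part s)).
Proof.
elim: s => [|[[] e] s IH] //= [H1 H2]; last exact: IH.
by split => //; apply: IH.
Qed.

Lemma qfree_lits s : qfree (conj_lits s).
Proof. by elim: s => [|[[] e] s IH]. Qed.

Lemma qfree_eqs (s : seq (equation L)) : qfree (conj_eqs s).
Proof. by elim: s. Qed.

Fixpoint dprod (ds1 ds2 : seq (seq (literal L))) : seq (seq (literal L)) :=
  match ds1 with
  | [::] => [::]
  | d :: ds => map (cat d) ds2 ++ dprod ds ds2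
  end.

Fixpoint dnf (b : bool) phi : seq (seq (literal L)) :=
  match phi with
  | Fls => if b then [::] else [:: [::]]
  | Eqn t1 t2 => [:: [:: (b, (t1, t2))]]
  | Neg p => dnf (~~ b) p
  | Conj p q => if b then dprod (dnf true p) (dnf true q) else dnf false p ++ dnf false q
  | Disj p q => if b then dnf true p ++ dnf true q else dprod (dnf false p) (dnf false q)
  | Imp p q => if b then dnf false p ++ dnf true q else dprod (dnf true p) (dnf false q)
  | _ => [::]
  end.

Fixpoint sdnf (A : algebra L) (v : nat -> A) (ds : seq (seq (literal L))) : Prop :=
  match ds with
  | [::] => False
  | d :: ds => sat v (conj_lits d) \/ sdnf v ds
  end.

Lemma sdnf_cat (A : algebra L) (v : nat -> A) ds1 ds2 :
  sdnf v (ds1 ++ ds2) <-> sdnf v ds1 \/ sdnf v ds2.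
Proof. elim: ds1 => [|d ds IH] /=; [tauto|rewrite IH; tauto]. Qed.

Lemma sdnf_map (A : algebra L) (v : nat -> A) d ds :
  sdnf v (map (cat d) ds) <-> sat v (conj_lits d) /\ sdnf v ds.
Proof. elim: ds => [|d' ds IH] /=; [tauto|rewrite IH sat_lits_cat; tauto]. Qed.

Lemma sdnf_prod (A : algebra L) (v : nat -> A) ds1 ds2 :
  sdnf v (dprod ds1 ds2) <-> sdnf v ds1 /\ sdnf v ds2.
Proof. elim: ds1 => [|d ds IH] /=; [tauto|rewrite sdnf_cat sdnf_map IH; tauto]. Qed.

Lemma dnf_correct (A : algebra L) (v : nat -> A) phi :
  qfree phi -> forall b, sdnf v (dnf b phi) <-> (if b then sat v phi else ~ sat v phi).
Proof.
elim: phi => //=.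
- by move=> _ [] /=; rewrite /conj_lits /big_conj /Tru /=; tauto.
- by move=> t1 t2 _ [] /=; rewrite /conj_lits /big_conj /Tru /lit_fml /eq_fml /=; tauto.
- move=> p IH qp b; rewrite IH //; case: b => /=; first tauto.
  split; [move=> H1 H2; exact: H2 H1|move=> H; exact: contrapT H].
- move=> p IH1 q IH2 [qp qq] [].
  + by rewrite sdnf_prod IH1 // IH2.
  + rewrite sdnf_cat IH1 // IH2 //; case: (pselect (sat v p)); case: (pselect (sat v q)); tauto.
- move=> p IH1 q IH2 [qp qq] [].
  + by rewrite sdnf_cat IH1 // IH2.
  + rewrite sdnf_prod IH1 // IH2 //; case: (pselect (sat v p)); case: (pselect (sat v q)); tauto.
- move=> p IH1 q IH2 [qp qq] [].
  + rewrite sdnf_cat IH1 // IH2 //; case: (pselect (sat v p)); case: (pselect (sat v q)); tauto.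
  + rewrite sdnf_prod IH1 // IH2 //; case: (pselect (sat v p)); case: (pselect (sat v q)); tauto.
Qed.

End Syn.

Lemma In_cat (T : Type) (x : T) (s1 s2 : seq T) :
  List.In x (s1 ++ s2) <-> List.In x s1 \/ List.In x s2.
Proof. elim: s1 => [|y s1 IH] /=; [tauto|rewrite IH; tauto]. Qed.

Section Compact.
Variable L : language.
Variable K : algebra L -> Prop.
Hypothesis HK : ultraprod_closed K.
Variable dflt : forall B : algebra L, B.

Lemma compact (M R : Type) (fr : R -> formula L) (pr : R -> nat -> M) (yr : R -> nat) :
  (forall r, qfree (fr r)) ->
  (forall l : seq R, exists (B : algebra L) (h : M -> B), K B /\
      forall r, List.In r l -> exists b : B, sat (upd (fun n => h (pr r n)) (yr r) b) (fr r)) ->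
  exists (B : algebra L) (h : M -> B), K B /\
      forall r, exists b : B, sat (upd (fun n => h (pr r n)) (yr r) b) (fr r).
Proof.
move=> qf H.
pose Bs (l : seq R) (i : seq R) := forall r, List.In r l -> List.In r i.
have [U [HU HUB]] : exists U : (seq R -> Prop) -> Prop, ultrafilter U /\ forall j, U (Bs j).
  apply: (ultra_exists [::]).
  - move=> j k; exists (j ++ k) => i Hi; split=> r Hr; apply: Hi; apply/In_cat; tauto.
  - by move=> j; exists j.
pose Bi (l : seq R) : algebra L := proj1_sig (cid (H l)).
pose hi (l : seq R) : M -> Bi l := proj1_sig (cid (proj2_sig (cid (H l)))).
have spec : forall l, K (Bi l) /\ forall r, List.In r l ->
    exists b : Bi l, sat (upd (fun n => hi l (pr r n)) (yr r) b) (fr r).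
  by move=> l; exact: (proj2_sig (cid (proj2_sig (cid (H l))))).
pose w (r : R) (l : seq R) : Bi l :=
  match pselect (exists b : Bi l, sat (upd (fun n => hi l (pr r n)) (yr r) b) (fr r)) with
  | left E => proj1_sig (cid E)
  | right _ => dflt (Bi l)
  end.
have KUP : K (UPalg Bi U).
  apply: (HK HU (fun l => (spec l).1)); exact: UP_is_ultraproduct.
exists (UPalg Bi U), (fun m => upi U (fun l => hi l m)); split => // r.
exists (upi U (w r)).
have -> : upd (fun n => upi U (fun l => hi l (pr r n))) (yr r) (upi U (w r))
    = (fun n => upi U (fun l => upd (fun n => hi l (pr r n)) (yr r) (w r l) n)).
  by apply: funext => n; rewrite /upd; case: eqP.
apply: ((@los_qf _ _ Bi U (UPalg Bi U) HU (upi U) (UP_hom HU) (upi_eq HU) (fr r) (fun l n => upd (fun n => hi l (pr r n)) (yr r) (w r l) n) (qf r)).2).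
apply: (U_mono HU (HUB [:: r])) => l Hl.
have Hr : List.In r l by apply: Hl; left.
rewrite /w; case: pselect => [E|nE]; first exact: (proj2_sig (cid E)).
by case: nE; exact: (spec l).2.
Qed.

End Compact.

Section Main.
Variable L : language.
Variable K : algebra L -> Prop.
Hypothesis hc : has_constant L.
Hypothesis HUc : universal_class K.
Hypothesis HAP : amalgamation K.
Hypothesis HVP : var_projection K.
Hypothesis HCM : cons_model_ext K.

Definition cst : Defs.fsym L := proj1_sig (cid hc).
Lemma cst_ar : arity cst = 0. Proof. exact: (proj2_sig (cid hc)). Qed.
Lemma noI (i : 'I_(arity cst)) : False.
Proof. by case: i => m; rewrite cst_ar. Qed.
Definition cargs (T : Type) : 'I_(arity cst) -> T := fun i => False_rect _ (noI i).
Definition dflt (B : algebra L) : B := interp B cst (cargs B).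
Definition cterm : term L := App (cargs (term L)).
Lemma term_in_cterm P : term_in P cterm.
Proof. by move=> i; case: (noI i). Qed.

Lemma HK_iso : iso_closed K. Proof. by case: HUc. Qed.
Lemma HK_sub : sub_closed K. Proof. by case: HUc. Qed.
Lemma HK_up : ultraprod_closed K. Proof. by case: HUc. Qed.

Lemma sig_eqP (T : Type) (P : T -> Prop) (x y : {z : T | P z}) :
  proj1_sig x = proj1_sig y -> x = y.
Proof.
case: x => x Hx; case: y => y Hy /= E; subst; congr exist; exact: Prop_irrelevance.
Qed.

Definition cme_prop (xs : seq nat) (y : nat) (psi : seq (literal L)) (chi : formula L) : Prop :=
  [/\ qfree chi, fml_in (in_vars xs) chi,
          Kmodels K (Imp (conj_lits psi) chi)
        & forall (A : algebra L) (a : nat -> A),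
            K A -> generated_by xs a -> sat a chi ->
            (forall eps : equation L,
                fml_in (in_vars xs) (eq_fml eps) ->
                Kmodels K (Imp (conj_eqs (pos_part psi)) (eq_fml eps)) ->
                sat a (eq_fml eps)) ->
            exists (B : algebra L) (e : A -> B) (b : B),
              [/\ K B, is_embedding e
                & sat (upd (fun n => e (a n)) y b) (conj_lits psi)]].

Definition vp_prop (xs : seq nat) (phi : seq (equation L)) (xi : formula L) : Prop :=
  [/\ qfree xi, fml_in (in_vars xs) xi,
          Kmodels K (Imp (conj_eqs phi) xi)
        & forall eps : equation L,
            fml_in (in_vars xs) (eq_fml eps) ->
            Kmodels K (Imp (conj_eqs phi) (eq_fml eps)) ->
            Kmodels K (Imp xi (eq_fml eps))].

Definition good (xs : seq nat) (y : nat) (psi : seq (literal L)) (chi xi : formula L) : Prop :=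
  [/\ y \notin xs, fml_in (in_vars_y xs y) (conj_lits psi),
      cme_prop xs y psi chi & vp_prop xs (pos_part psi) xi].

Lemma good_exists xs y psi : y \notin xs -> fml_in (in_vars_y xs y) (conj_lits psi) ->
  exists chi xi, good xs y psi chi xi.
Proof.
move=> Hy Hf.
have [chi Hchi] := HCM Hy Hf.
have [xi Hxi] := HVP Hy (fml_in_pos_part Hf).
by exists chi, xi; split.
Qed.

Section Gen.
Variables (B : algebra L) (xs : seq nat) (a : nat -> B).
Definition Gc : Type := {b : B | exists t, term_in (in_vars xs) t /\ eval a t = b}.
Lemma Gclosed (f : Defs.fsym L) (args : 'I_(arity f) -> Gc) :
  exists t, term_in (in_vars xs) t /\ eval a t = interp B f (fun j => proj1_sig (args j)).
Proof.
pose ts j := proj1_sig (cid (proj2_sig (args j))).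
exists (App ts); split.
- by move=> j; exact: (proj2_sig (cid (proj2_sig (args j)))).1.
- rewrite /=; congr (interp B f); apply: funext => j.
  exact: (proj2_sig (cid (proj2_sig (args j)))).2.
Qed.
Definition GI (f : Defs.fsym L) (args : 'I_(arity f) -> Gc) : Gc :=
  exist _ _ (Gclosed args).
Definition Galg : algebra L := @Defs.Algebra L Gc GI.
Definition Gval (c : Galg) : B := proj1_sig c.
Lemma Gval_emb : is_embedding Gval.
Proof. split; [move=> x y; exact: sig_eqP|by []]. Qed.
Definition Gcst : Galg := exist _ (eval a cterm) (ex_intro _ cterm (conj (term_in_cterm _) erefl)).
Definition Ga (n : nat) : Galg :=
  match pselect (exists t, term_in (in_vars xs) t /\ eval a t = a n) with
  | left H => exist _ (a n) H
  | right _ => Gcst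
  end.
Lemma Ga_val n : n \in xs -> Gval (Ga n) = a n.
Proof.
move=> Hn; rewrite /Ga; case: pselect => // nE; case: nE.
by exists (Var n).
Qed.
Lemma Ga_gen : generated_by xs Ga.
Proof.
move=> c; have [t [Ht Et]] := proj2_sig c; exists t; split => //.
apply: sig_eqP; rewrite -/(Gval _) -Et.
rewrite -(eval_hom _ _ (Gval_emb.2)); apply: (eval_fv Ht) => n Hn.
exact: Ga_val.
Qed.
End Gen.

Lemma push_sat (A B : algebra L) (k : A -> B) (v : nat -> A) y b phi :
  is_embedding k -> qfree phi -> sat (upd v y b) phi ->
  sat (upd (fun n => k (v n)) y (k b)) phi.
Proof. by move=> hk hq H; rewrite -comp_upd; apply/(sat_emb _ hk hq). Qed.

Lemma realize_one (B : algebra L) xs y psi chi xi (a : nat -> B) :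
  K B -> good xs y psi chi xi -> sat a chi -> sat a xi ->
  exists (E : algebra L) (k : B -> E) (e : E),
    [/\ K E, is_embedding k & sat (upd (fun n => k (a n)) y e) (conj_lits psi)].
Proof.
move=> KB [Hy Hf [qc fc Kc Hc] [qx fx Kx Hx]] sc sx.
pose C := Galg xs a.
have KC : K C by exact: (HK_sub (@Gval_emb _ xs a) KB).
have agree : forall n, in_vars xs n -> Gval (Ga xs a n) = a n by move=> n; exact: Ga_val.
have scC : sat (Ga xs a) chi.
  apply/(sat_emb _ (@Gval_emb _ xs a) qc).
  by apply/(sat_fv fc agree).
have sxC : sat (Ga xs a) xi.
  apply/(sat_emb _ (@Gval_emb _ xs a) qx).
  by apply/(sat_fv fx agree).
have [D [e [d [KD he sD]]]] := Hc C (Ga xs a) KC (@Ga_gen _ xs a) scC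
   (fun eps fe Ke => Hx eps fe Ke C KC (Ga xs a) sxC).
have [E [k1 [k2 [KE hk1 hk2 com]]]] := HAP KC KB KD (@Gval_emb _ xs a) he.
exists E, k1, (k2 d); split => //.
have := push_sat hk2 (qfree_lits psi) sD.
have agr : forall n, in_vars_y xs y n ->
    upd (fun n => k2 (e (Ga xs a n))) y (k2 d) n = upd (fun n => k1 (a n)) y (k2 d) n.
  by move=> n [Hn|->]; rewrite /upd; case: eqP => // _; rewrite -com Ga_val.
by move/(sat_fv Hf agr).
Qed.

Lemma emb_id (A : algebra L) : is_embedding (fun x : A => x).
Proof. by split. Qed.

Lemma emb_comp (A B C : algebra L) (h : A -> B) (k : B -> C) :
  is_embedding h -> is_embedding k -> is_embedding (fun x => k (h x)).
Proof.
move=> [ih hh] [ik hk]; split.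
- by move=> x y /ik /ih.
- by move=> f args; rewrite hh hk.
Qed.

Section Step.
Variable A : algebra L.

Inductive sreq : Type :=
| SHom (f : Defs.fsym L) (args : 'I_(arity f) -> A)
| SNeq (a1 a2 : A)
| SInst (xs : seq nat) (y : nat) (psi : seq (literal L)) (chi xi : formula L) (a : nat -> A).

Definition sfr (r : sreq) : formula L :=
  match r with
  | SHom f _ => Eqn (App (fun j : 'I_(arity f) => Var (nat_of_ord j))) (Var (arity f))
  | SNeq _ _ => Neg (Eqn (Var 0) (Var 1))
  | SInst _ _ psi _ _ _ => conj_lits psi
  end.

Definition spr (r : sreq) : nat -> A :=
  match r with
  | SHom f args => fun n => if @insub _ _ 'I_(arity f) n is Some j then args j else interp A f args
  | SNeq a1 a2 => fun n => if n == 0 then a1 else a2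
  | SInst _ _ _ _ _ a => a
  end.

Definition syr (r : sreq) : nat :=
  match r with
  | SHom f _ => (arity f).+1
  | SNeq _ _ => 2
  | SInst _ y _ _ _ _ => y
  end.

Definition svalid (r : sreq) : Prop :=
  match r with
  | SHom _ _ => True
  | SNeq a1 a2 => a1 <> a2
  | SInst xs y psi chi xi a => [/\ good xs y psi chi xi, sat a chi & sat a xi]
  end.

Definition sats (B : algebra L) (h : A -> B) (r : sreq) : Prop :=
  exists b : B, sat (upd (fun n => h (spr r n)) (syr r) b) (sfr r).

Lemma sfr_qf r : qfree (sfr r).
Proof. case: r => //= *; exact: qfree_lits. Qed.

Lemma spr_ord (f : Defs.fsym L) (args : 'I_(arity f) -> A) (j : 'I_(arity f)) :
  spr (SHom args) j = args j.
Proof. by rewrite /= valK. Qed.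

Lemma spr_ar (f : Defs.fsym L) (args : 'I_(arity f) -> A) :
  spr (SHom args) (arity f) = interp A f args.
Proof. by rewrite /= insubF // ltnn. Qed.

Lemma sats_hom (B : algebra L) (h : A -> B) (f : Defs.fsym L) (args : 'I_(arity f) -> A) :
  sats h (SHom args) <-> h (interp A f args) = interp B f (fun j => h (args j)).
Proof.
have E : forall b : B, sat (upd (fun n => h (spr (SHom args) n)) (syr (SHom args)) b) (sfr (SHom args))
    <-> h (interp A f args) = interp B f (fun j => h (args j)).
  move=> b; change (interp B f (fun j => upd (fun n => h (spr (SHom args) n)) (arity f).+1 b j)
     = upd (fun n => h (spr (SHom args) n)) (arity f).+1 b (arity f)
     <-> h (interp A f args) = interp B f (fun j => h (args j))).
  rewrite {2}/upd ifN ?spr_ar; last by rewrite eqn_leq ltnn andbF.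
  have -> : (fun j : 'I_(arity f) => upd (fun n => h (spr (SHom args) n)) (arity f).+1 b j)
      = (fun j => h (args j)).
    apply: funext => j; rewrite /upd ifN ?spr_ord // neq_ltn.
    by rewrite (ltn_trans (ltn_ord j)).
  by split=> ->.
split; first by case=> b /E.
by move=> H; exists (dflt B); apply/E.
Qed.

Lemma sats_neq (B : algebra L) (h : A -> B) (a1 a2 : A) :
  sats h (SNeq a1 a2) <-> h a1 <> h a2.
Proof.
rewrite /sats /= /upd /=; split; first by case.
by move=> H; exists (dflt B).
Qed.

Lemma sats_push (B E : algebra L) (h : A -> B) (k : B -> E) r :
  is_embedding k -> sats h r -> sats (fun x => k (h x)) r.
Proof.
move=> hk [b Hb]; exists (k b).
exact: (push_sat hk (sfr_qf r) Hb).
Qed.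

Definition sR : Type := {r : sreq | svalid r}.

Lemma finite_step (l : seq sR) : K A ->
  exists (B : algebra L) (h : A -> B), [/\ K B, is_embedding h &
    forall r, List.In r l -> sats h (proj1_sig r)].
Proof.
move=> KA; elim: l => [|r l [B [h [KB hh Hl]]]].
  by exists A, (fun x => x); split => //; exact: emb_id.
case: r => [[f args|a1 a2|xs y psi chi xi a]] Hv.
- exists B, h; split => // r [<-|]; last exact: Hl.
  by apply/sats_hom; case: hh => _ ->.
- exists B, h; split => // r [<-|]; last exact: Hl.
  by apply/sats_neq => /hh.1.
- case: Hv => Hg sc sx.
  have sc' : sat (fun n => h (a n)) chi by apply/(sat_emb _ hh) => //; case: Hg => _ _ [].
  have sx' : sat (fun n => h (a n)) xi by apply/(sat_emb _ hh) => //; case: Hg => _ _ _ [].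
  have [E [k [e [KE hk He]]]] := realize_one KB Hg sc' sx'.
  exists E, (fun x => k (h x)); split => //; first exact: emb_comp.
  move=> r [<-|Hr]; first by exists e.
  exact: sats_push (Hl r Hr).
Qed.

Lemma step : K A ->
  exists (B : algebra L) (h : A -> B), [/\ K B, is_embedding h &
    forall xs y psi chi xi, good xs y psi chi xi -> forall a : nat -> A,
      sat a chi -> sat a xi -> exists b, sat (upd (fun n => h (a n)) y b) (conj_lits psi)].
Proof.
move=> KA.
have [B [h [KB Hall]]] := @compact _ _ HK_up dflt A sR (fun r : sR => sfr (proj1_sig r))
  (fun r => spr (proj1_sig r)) (fun r => syr (proj1_sig r)) (fun r => sfr_qf (proj1_sig r))
  (fun l => let: ex_intro B (ex_intro h (And3 KB _ Hl)) := finite_step l KA in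
            ex_intro _ B (ex_intro _ h (conj KB Hl))).
exists B, h; split => //.
- split.
  + move=> a1 a2 E; apply: contrapT => ne.
    have := Hall (exist _ (SNeq a1 a2) ne); move/sats_neq; exact.
  + move=> f args; have := Hall (exist _ (SHom args) I); move/sats_hom; exact.
- move=> xs y psi chi xi Hg a sc sx.
  exact: (Hall (exist _ (SInst xs y psi chi xi a) (And3 Hg sc sx))).
Qed.

End Step.

Definition realizes (A B : algebra L) (h : A -> B) : Prop :=
  forall xs y psi chi xi, good xs y psi chi xi -> forall a : nat -> A,
      sat a chi -> sat a xi -> exists b, sat (upd (fun n => h (a n)) y b) (conj_lits psi).

Definition EC (N : algebra L) : Prop :=
  forall xs y psi chi xi, good xs y psi chi xi -> forall a : nat -> N,
      sat a chi -> sat a xi -> exists b, sat (upd a y b) (conj_lits psi).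

Definition stage : Type := {A : algebra L | K A}.

Definition nextB (s : stage) : algebra L := proj1_sig (cid (step (proj2_sig s))).
Definition nexth (s : stage) : proj1_sig s -> nextB s :=
  proj1_sig (cid (proj2_sig (cid (step (proj2_sig s))))).
Lemma next_spec (s : stage) : [/\ K (nextB s), is_embedding (@nexth s) & realizes (@nexth s)].
Proof. exact: (proj2_sig (cid (proj2_sig (cid (step (proj2_sig s)))))). Qed.
Definition next (s : stage) : stage :=
  exist _ (nextB s) (let: And3 k _ _ := next_spec s in k).

Definition mymax (T : Type) (F : T -> nat) (s : seq T) : nat :=
  foldr (fun y acc => maxn (F y) acc) 0 s.
Lemma le_mymax (T : eqType) (F : T -> nat) (s : seq T) x : x \in s -> F x <= mymax F s.
Proof.
elim: s => [|y s IH] //; rewrite inE => /orP [/eqP ->|/IH H] /=.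
- exact: leq_maxl.
- exact: leq_trans H (leq_maxr _ _).
Qed.

Section Chain.
Variable s0 : stage.

Fixpoint chain (n : nat) : stage :=
  match n with 0 => s0 | n'.+1 => next (chain n') end.
Definition Ch (n : nat) : algebra L := proj1_sig (chain n).
Definition ce (n : nat) : Ch n -> Ch n.+1 := @nexth (chain n).
Lemma ce_emb n : is_embedding (@ce n). Proof. by case: (next_spec (chain n)). Qed.
Lemma ce_real n : realizes (@ce n). Proof. by case: (next_spec (chain n)). Qed.
Lemma KCh n : K (Ch n). Proof. exact: (proj2_sig (chain n)). Qed.

Definition thread (t : forall n, Ch n) : Prop :=
  exists m, forall j, m <= j -> t j.+1 = ce (t j).

Definition castC (n m : nat) (H : n = m) (x : Ch n) : Ch m :=
  eq_rect n (fun k => carrier (Ch k)) x m H.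

Lemma castC_id n (H : n = n) x : castC H x = x.
Proof. by rewrite (eq_axiomK H). Qed.

Fixpoint tf (m : nat) (x : Ch m) (k : nat) {struct k} : Ch k :=
  match eq_comparable m k with
  | left H => castC H x
  | right _ => match k return Ch k with
               | 0 => dflt (Ch 0)
               | k'.+1 => ce (tf x k')
               end
  end.

Lemma tf_at m (x : Ch m) : tf x m = x.
Proof.
have E : forall k, tf x k = match eq_comparable m k with
  | left H => castC H x
  | right _ => match k return Ch k with
               | 0 => dflt (Ch 0)
               | k'.+1 => ce (tf x k')
               end
  end by case.
by rewrite E; case: (eq_comparable m m) => // H; rewrite castC_id.
Qed.

Lemma tf_S m (x : Ch m) k : m <= k -> tf x k.+1 = ce (tf x k).
Proof.
move=> Hmk; rewrite /=; case: (eq_comparable m k.+1) => // H.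
by exfalso; move: Hmk; rewrite H ltnn.
Qed.

Lemma tf_thread m (x : Ch m) : thread (tf x).
Proof. by exists m => j; exact: tf_S. Qed.

Fixpoint lift0 (m : nat) (x : Ch 0) : Ch m :=
  match m with 0 => x | m'.+1 => ce (lift0 m' x) end.

Lemma lift0_inj m : forall x y, lift0 m x = lift0 m y -> x = y.
Proof. elim: m => [|m IH] x y //= /(ce_emb m).1; exact: IH. Qed.

Lemma lift0_hom m (f : Defs.fsym L) (args : 'I_(arity f) -> Ch 0) :
  lift0 m (interp (Ch 0) f args) = interp (Ch m) f (fun j => lift0 m (args j)).
Proof. by elim: m => [|m IH] //=; rewrite IH (ce_emb m).2. Qed.

Lemma lift0_thread x : thread (fun m => lift0 m x).
Proof. by exists 0. Qed.

Lemma Unat_ex : exists U : (nat -> Prop) -> Prop, ultrafilter U /\ forall j, U (fun m => j <= m).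
Proof.
apply: (@ultra_exists nat nat (fun n m => n <= m) 0).
- move=> j k; exists (maxn j k) => i H; split.
  + exact: leq_trans (leq_maxl j k) H.
  + exact: leq_trans (leq_maxr j k) H.
- by move=> j; exists j.
Qed.
Definition Unat : (nat -> Prop) -> Prop := proj1_sig (cid Unat_ex).
Lemma Unat_spec : ultrafilter Unat /\ forall j, Unat (fun m => j <= m).
Proof. exact: (proj2_sig (cid Unat_ex)). Qed.
Lemma HUn : ultrafilter Unat. Proof. exact: Unat_spec.1. Qed.
Lemma HUnB j : Unat (fun m => j <= m). Proof. exact: Unat_spec.2. Qed.

Definition P : algebra L := UPalg Ch Unat.
Lemma KP : K P.
Proof. exact: (HK_up HUn KCh (@UP_is_ultraproduct _ _ Ch Unat HUn)). Qed.

Definition pupi : (forall n, Ch n) -> P := upi Unat.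

Lemma thread_op (f : Defs.fsym L) (ts : 'I_(arity f) -> forall n, Ch n) :
  (forall j, thread (ts j)) -> thread (fun n => interp (Ch n) f (fun j => ts j n)).
Proof.
move=> H; pose bd j := proj1_sig (cid (H j)).
exists (mymax bd (enum 'I_(arity f))) => k Hk; rewrite (ce_emb k).2; congr (interp _ f).
apply: funext => j; apply: (proj2_sig (cid (H j))).
exact: leq_trans (le_mymax bd (mem_enum _ j)) Hk.
Qed.

Definition Nc : Type := {p : P | exists t, thread t /\ pupi t = p}.
Lemma Nclosed (f : Defs.fsym L) (args : 'I_(arity f) -> Nc) :
  exists t, thread t /\ pupi t = interp P f (fun j => proj1_sig (args j)).
Proof.
pose ts j := proj1_sig (cid (proj2_sig (args j))).
have Hts : forall j, thread (ts j) /\ pupi (ts j) = proj1_sig (args j).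
  by move=> j; exact: (proj2_sig (cid (proj2_sig (args j)))).
exists (fun n => interp (Ch n) f (fun j => ts j n)); split.
- by apply: thread_op => j; case: (Hts j).
- rewrite /pupi (UP_hom HUn); congr (interp P f); apply: funext => j.
  by case: (Hts j).
Qed.
Definition NI (f : Defs.fsym L) (args : 'I_(arity f) -> Nc) : Nc := exist _ _ (Nclosed args).
Definition Nalg : algebra L := @Defs.Algebra L Nc NI.
Definition Nval (c : Nalg) : P := proj1_sig c.
Lemma Nval_emb : is_embedding Nval.
Proof. split; [move=> x y; exact: sig_eqP|by []]. Qed.
Lemma KN : K Nalg. Proof. exact: (HK_sub Nval_emb KP). Qed.

Definition j0 (x : Ch 0) : Nalg :=
  exist _ (pupi (fun m => lift0 m x)) (ex_intro _ _ (conj (lift0_thread x) erefl)).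
Lemma j0_emb : is_embedding j0.
Proof.
split.
- move=> x y /(congr1 Nval) /= /(upi_eq HUn) H.
  have [m [_ Em]] := U_ex HUn (U_and HUn (HUnB 0) H).
  exact: lift0_inj Em.
- move=> f args; apply: sig_eqP.
  transitivity (pupi (fun m => interp (Ch m) f (fun j => lift0 m (args j)))).
    by rewrite /= /pupi; congr (upi Unat _); apply: functional_extensionality_dep => m; exact: lift0_hom.
  by rewrite /pupi (UP_hom HUn).
Qed.

Lemma N_EC : EC Nalg.
Proof.
move=> xs y psi chi xi Hg a sc sx.
have qc : qfree chi by case: Hg => _ _ [].
have qx : qfree xi by case: Hg => _ _ _ [].
have qp : qfree (conj_lits psi) by exact: qfree_lits.
have Hf : fml_in (in_vars_y xs y) (conj_lits psi) by case: Hg.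
pose t n := proj1_sig (cid (proj2_sig (a n))).
have Ht : forall n, thread (t n) /\ pupi (t n) = Nval (a n).
  by move=> n; exact: (proj2_sig (cid (proj2_sig (a n)))).
pose bd n := proj1_sig (cid (Ht n).1).
have Hbd : forall n j, bd n <= j -> t n j.+1 = ce (t n j).
  by move=> n; exact: (proj2_sig (cid (Ht n).1)).
pose m := mymax bd xs.
have Hm : forall n, n \in xs -> bd n <= m.
  by move=> n Hn; exact: le_mymax.
have Eva : (fun n => Nval (a n)) = (fun n => pupi (fun j => t n j)).
  by apply: funext => n; rewrite (Ht n).2.
have sc' : Unat (fun j => sat (fun n => t n j) chi).
  apply/(@los_qf _ _ Ch Unat P HUn pupi (UP_hom HUn) (upi_eq HUn) chi (fun j n => t n j) qc).
  by rewrite -Eva; apply/(sat_emb _ Nval_emb qc).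
have sx' : Unat (fun j => sat (fun n => t n j) xi).
  apply/(@los_qf _ _ Ch Unat P HUn pupi (UP_hom HUn) (upi_eq HUn) xi (fun j n => t n j) qx).
  by rewrite -Eva; apply/(sat_emb _ Nval_emb qx).
have [k [[Hk sck] sxk]] := U_ex HUn (U_and HUn (U_and HUn (HUnB m) sc') sx').
have [b Hb] := ce_real Hg sck sxk.
exists (exist _ (pupi (tf b)) (ex_intro _ _ (conj (tf_thread b) erefl))).
apply/(sat_emb _ Nval_emb qp).
have -> : (fun n => Nval (upd a y (exist _ (pupi (tf b)) (ex_intro _ _ (conj (tf_thread b) erefl))) n))
   = (fun n => pupi (fun j => upd (fun n => t n j) y (tf b j) n)).
  apply: funext => n; rewrite /upd; case: eqP => // _.
  by rewrite (Ht n).2.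
apply/(@los_qf _ _ Ch Unat P HUn pupi (UP_hom HUn) (upi_eq HUn) _ (fun j n => upd (fun n => t n j) y (tf b j) n) qp).
have claim : forall d, sat (upd (fun n => t n (d + k.+1)) y (tf b (d + k.+1))) (conj_lits psi).
  elim=> [|d IH].
  - move: Hb; rewrite add0n tf_at; apply: (proj1 (sat_fv Hf _)) => n [Hn|->]; rewrite /upd; case: eqP => // _.
    by rewrite Hbd // (leq_trans (Hm n Hn) Hk).
  - have := push_sat (ce_emb (d + k.+1)) qp IH.
    rewrite addSn.
    apply: (proj1 (sat_fv Hf _)) => n [Hn|->]; rewrite /upd; case: eqP => // _;
      try (by rewrite tf_S // leq_addl).
    rewrite Hbd //; apply: leq_trans (Hm n Hn) _; apply: leq_trans Hk _.
    by rewrite -addSnnS leq_addl.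
apply: (U_mono HUn (HUnB k.+1)) => j Hj.
by have := claim (j - k.+1); rewrite subnK.
Qed.

End Chain.

Lemma ec_ext (A : algebra L) : K A ->
  exists (N : algebra L) (h : A -> N), [/\ K N, is_embedding h & EC N].
Proof.
move=> KA; exists (Nalg (exist _ A KA)), (@j0 (exist _ A KA)); split.
- exact: KN.
- exact: (@j0_emb (exist _ A KA)).
- exact: N_EC.
Qed.

Lemma In_has (T : Type) (x : T) (s : seq T) : List.In x s -> has (fun z => `[< z = x >]) s.
Proof. elim: s => [|y s IH] //= [->|/IH ->]; last by rewrite orbT. by rewrite asboolT. Qed.

Lemma In_map (T1 T2 : Type) (F : T1 -> T2) (x : T1) (s : seq T1) :
  List.In x s -> List.In (F x) (map F s).
Proof. elim: s => [|y s IH] //= [->|/IH]; tauto. Qed.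

Lemma mem_In (T : eqType) (x : T) (s : seq T) : x \in s -> List.In x s.
Proof. elim: s => [|y s IH] //; rewrite inE => /orP [/eqP ->|/IH H]; [by left|by right]. Qed.

Lemma In_flatten (T1 T2 : Type) (F : T1 -> seq T2) (r : T1) (l : seq T1) x :
  List.In r l -> List.In x (F r) -> List.In x (flatten (map F l)).
Proof.
elim: l => [|r' l IH] //= [->|Hr] Hx; apply/In_cat; [left|right] => //; exact: IH.
Qed.

Lemma sat_bigconj (A : algebra L) (v : nat -> A) (T : Type) (F : T -> formula L) (l : seq T) :
  sat v (big_conj (map F l)) <-> (forall r, List.In r l -> sat v (F r)).
Proof.
elim: l => [|r l IH] /=.
- by split; [move=> _ r []|move=> _; rewrite /Tru /= => -[]].
- rewrite IH; split; first by move=> [H1 H2] r' [<-|/H2].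
  by move=> H; split; [apply: H; left|move=> r' Hr; apply: H; right].
Qed.

Lemma fml_in_bigconj (P : nat -> Prop) (T : Type) (F : T -> formula L) (l : seq T) :
  (forall r, List.In r l -> fml_in P (F r)) -> fml_in P (big_conj (map F l)).
Proof.
elim: l => [|r l IH] //= H; split; [apply: H; left|apply: IH => r' Hr; apply: H; right] => //.
Qed.

Section Diagram.
Variable M : algebra L.
Hypothesis HM : model (Th K) M.

Definition ddiag (r : sreq M) : Prop :=
  match r with
  | SHom _ _ => True
  | SNeq a1 a2 => a1 <> a2
  | SInst _ _ _ _ _ _ => False
  end.
Definition dR : Type := {r : sreq M | ddiag r}.

Definition relts (r : sreq M) : seq M :=
  match r with
  | SHom f args => interp M f args :: map args (enum 'I_(arity f))
  | SNeq a1 a2 => [:: a1; a2]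
  | SInst _ _ _ _ _ _ => [::]
  end.

Lemma diag_finite (l : seq dR) :
  exists (B : algebra L) (h : M -> B), K B /\
      forall r, List.In r l -> sats h (proj1_sig r).
Proof.
pose E := flatten (map (fun r : dR => relts (proj1_sig r)) l).
pose idx (m : M) := find (fun z => `[< z = m >]) E.
have Hidx : forall r : dR, List.In r l -> forall m, List.In m (relts (proj1_sig r)) ->
    nth (dflt M) E (idx m) = m /\ idx m < size E.
  move=> r Hr m Hm.
  have Hh : has (fun z => `[< z = m >]) E.
    apply: In_has; exact: (@In_flatten _ _ (fun r : dR => relts (proj1_sig r)) r l m Hr Hm).
  split; last by rewrite -has_find.
  by have /asboolP := nth_find (dflt M) Hh.
pose rf (r : sreq M) : formula L :=
  match r with
  | SHom f args => Eqn (App (fun j => Var (idx (args j)))) (Var (idx (interp M f args)))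
  | SNeq a1 a2 => Neg (Eqn (Var (idx a1)) (Var (idx a2)))
  | SInst _ _ _ _ _ _ => Tru L
  end.
pose Phi := big_conj (map (fun r : dR => rf (proj1_sig r)) l).
pose V := iota 0 (size E).
have Hlt : forall r : dR, List.In r l -> forall m, List.In m (relts (proj1_sig r)) -> idx m < size E.
  by move=> r Hr m Hm; exact: (Hidx r Hr m Hm).2.
have Heq : forall r : dR, List.In r l -> forall m, List.In m (relts (proj1_sig r)) -> nth (dflt M) E (idx m) = m.
  by move=> r Hr m Hm; exact: (Hidx r Hr m Hm).1.
have fPhi : fml_in (fun n => n \in V \/ False) Phi.
  apply: fml_in_bigconj => -[[f args|a1 a2|? ? ? ? ? ?] Hd] Hr //=.
  - split.
    + move=> j /=; left; rewrite mem_iota add0n leq0n /=.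
      apply: (Hlt _ Hr (args j)) => /=; right; apply: In_map; apply: mem_In; exact: mem_enum.
    + left; rewrite mem_iota add0n leq0n /=; apply: (Hlt _ Hr (interp M f args)) => /=; by left.
  - split; left; rewrite mem_iota add0n leq0n /=; [apply: (Hlt _ Hr a1)|apply: (Hlt _ Hr a2)] => /=; tauto.
have sM : sat (fun n => nth (dflt M) E n) Phi.
  apply/sat_bigconj => -[[f args|a1 a2|? ? ? ? ? ?] Hd] Hr //=.
  - rewrite (Heq _ Hr (interp M f args)) /=; last by left.
    congr (interp M f); apply: funext => j; apply: (Heq _ Hr) => /=.
    right; apply: In_map; apply: mem_In; exact: mem_enum.
  - have Hd2 : a1 <> a2 := Hd; by rewrite (Heq _ Hr a1) ?(Heq _ Hr a2) /=; tauto.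
have nK : ~ Kmodels K (closeAll V (Neg Phi)).
  move=> HK'.
  have HT : Th K (closeAll V (Neg Phi)).
    split => //; rewrite /sentence; apply: fml_in_closeAll; exact: fPhi.
  have := HM HT; rewrite /holds => /sat_closeAll /(_ (fun n => nth (dflt M) E n)) /=.
  by apply.
have [B [KB nB]] : exists B, K B /\ ~ holds B (closeAll V (Neg Phi)).
  apply: contrapT => nE; apply: nK => B KB; apply: contrapT => nH; apply: nE; by exists B.
have [v sv] : exists v : nat -> B, sat v Phi.
  apply: contrapT => nE; apply: nB; rewrite /holds; apply/sat_closeAll => v /= sv.
  by apply: nE; exists v.
exists B, (fun m => v (idx m)); split => // -[[f args|a1 a2|? ? ? ? ? ?] Hd] Hr //=.
- apply/sats_hom; move/sat_bigconj: sv => /(_ _ Hr) /= ->.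
  by [].
- apply/sats_neq; by move/sat_bigconj: sv => /(_ _ Hr) /=.
Qed.

Lemma ThK_K : K M.
Proof.
have [B [h [KB Hall]]] := @compact _ _ HK_up dflt M dR (fun r : dR => sfr (proj1_sig r))
  (fun r => spr (proj1_sig r)) (fun r => syr (proj1_sig r)) (fun r => sfr_qf (proj1_sig r))
  diag_finite.
have Hemb : is_embedding h.
  split.
  - move=> a1 a2 E; apply: contrapT => ne.
    have := Hall (exist _ (SNeq a1 a2) ne); move/sats_neq; by apply.
  - move=> f args; have := Hall (exist _ (SHom args) I); by move/sats_hom.
exact: (HK_sub Hemb KB).
Qed.

End Diagram.

Definition Tstar : theory L := fun phi =>
  sentence phi /\
  ((universal phi /\ Kmodels K phi) \/
   exists xs y psi chi xi, good xs y psi chi xi /\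
      phi = closeAll xs (Imp (Conj chi xi) (Ex y (conj_lits psi)))).

Lemma EC_model (N : algebra L) : K N -> EC N -> model Tstar N.
Proof.
move=> KN ECN phi [_ [[_ Hk]|[xs [y [psi [chi [xi [Hg ->]]]]]]]]; first exact: Hk.
rewrite /holds; apply/sat_closeAll => v /= [sc sx].
exact: ECN Hg v sc sx.
Qed.

Lemma ax_in xs y psi chi xi : good xs y psi chi xi ->
  Tstar (closeAll xs (Imp (Conj chi xi) (Ex y (conj_lits psi)))).
Proof.
move=> Hg; split; last by right; exists xs, y, psi, chi, xi.
case: Hg => Hy Hf [qc fc _ _] [qx fx _ _].
rewrite /sentence; apply: fml_in_closeAll => /=; split; first split.
- by apply: fml_in_mono fc => n; left.
- by apply: fml_in_mono fx => n; left.
- by apply: fml_in_mono Hf => n [Hn|->]; [right; left|left].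
Qed.

Lemma univ_in xs y psi chi xi : good xs y psi chi xi ->
  Tstar (closeAll (y :: xs) (Imp (conj_lits psi) (Conj chi xi))).
Proof.
move=> Hg; case: (Hg) => Hy Hf [qc fc Kc _] [qx fx Kx _].
split; last (left; split).
- rewrite /sentence; apply: fml_in_closeAll => /=; split; last split.
  + by apply: fml_in_mono Hf => n [Hn|->]; left; rewrite inE ?eqxx // Hn orbT.
  + by apply: fml_in_mono fc => n Hn; left; rewrite inE Hn orbT.
  + by apply: fml_in_mono fx => n Hn; left; rewrite inE Hn orbT.
- by apply: universal_closeAll => /=; split; [exact: qfree_lits|split].
- move=> A KA; rewrite /holds; apply/sat_closeAll => v /= Hp; split.
  + exact: Kc A KA v Hp.
  + exact: Kx A KA v (sat_pos_part Hp).
Qed.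

Lemma QE_lits x (D : seq (literal L)) : exists th, qfree th /\
  forall N, model Tstar N -> forall v : nat -> N, sat v (Ex x (conj_lits D)) <-> sat v th.
Proof.
pose xs := [seq n <- lsvars D | n != x].
have Hy : x \notin xs by rewrite mem_filter eqxx.
have Hf : fml_in (in_vars_y xs x) (conj_lits D).
  apply: fml_in_mono (fml_in_lits D) => n Hn; rewrite /in_vars_y /in_vars.
  case: (eqVneq n x) => [->|nx]; [by right|left]; by rewrite mem_filter nx.
have [chi [xi Hg]] := good_exists Hy Hf.
exists (Conj chi xi); split; first by case: Hg => _ _ [qc _ _ _] [qx _ _ _].
move=> N HN v; split.
- move=> [a Ha].
  have := HN _ (univ_in Hg); rewrite /holds => /sat_closeAll /(_ (upd v x a)) /= /(_ Ha).
  case: Hg => _ _ [_ fc _ _] [_ fx _ _].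
  have agree : forall n, in_vars xs n -> upd v x a n = v n.
    move=> n Hn; rewrite /upd; case: eqP => // En; by move: Hy; rewrite -En Hn.
  by rewrite (sat_fv fc agree) (sat_fv fx agree).
- move=> H; have := HN _ (ax_in Hg); rewrite /holds => /sat_closeAll /(_ v) /=.
  exact.
Qed.

Lemma QE_ex x th : qfree th -> exists th', qfree th' /\
  forall N, model Tstar N -> forall v : nat -> N, sat v (Ex x th) <-> sat v th'.
Proof.
move=> qt.
suff : forall ds, exists th', qfree th' /\ forall N, model Tstar N -> forall v : nat -> N,
    (exists a, sdnf (upd v x a) ds) <-> sat v th'.
  move=> /(_ (dnf true th)) [th' [q' H']]; exists th'; split => // N HN v.
  rewrite -(H' N HN v) /=; split=> -[a Ha]; exists a; move: Ha; by rewrite (dnf_correct _ qt true).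
elim=> [|d ds [th1 [q1 H1]]].
- by exists (Fls L); split => // N HN v /=; split => // -[].
- have [th0 [q0 H0]] := QE_lits x d.
  exists (Disj th0 th1); split => // N HN v /=.
  rewrite -(H0 N HN v) -(H1 N HN v) /=; split.
  + by move=> [a [Ha|Ha]]; [left|right]; exists a.
  + by move=> [[a Ha]|[a Ha]]; exists a; [left|right].
Qed.

Lemma QE phi : exists th, qfree th /\
  forall N, model Tstar N -> forall v : nat -> N, sat v phi <-> sat v th.
Proof.
elim: phi.
- by exists (Fls L).
- by move=> t1 t2; exists (Eqn t1 t2).
- move=> p [th [q H]]; exists (Neg th); split => // N HN v /=; by rewrite H.
- move=> p [th1 [q1 H1]] q [th2 [q2 H2]]; exists (Conj th1 th2); split => // N HN v /=.
  by rewrite H1 // H2.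
- move=> p [th1 [q1 H1]] q [th2 [q2 H2]]; exists (Disj th1 th2); split => // N HN v /=.
  by rewrite H1 // H2.
- move=> p [th1 [q1 H1]] q [th2 [q2 H2]]; exists (Imp th1 th2); split => // N HN v /=.
  by rewrite H1 // H2.
- move=> x p [th [q H]].
  have [th' [q' H']] := QE_ex x q.
  exists th'; split => // N HN v; rewrite -(H' N HN v) /=.
  by split=> -[a Ha]; exists a; [rewrite -H|rewrite H].
- move=> x p [th [q H]].
  have [th' [q' H']] := @QE_ex x (Neg th) q.
  exists (Neg th'); split => // N HN v; rewrite /= -(H' N HN v) /=.
  split.
  + by move=> Ha [a Hn]; apply: Hn; rewrite -H.
  + move=> Hn a; rewrite H //; apply: contrapT => nH; apply: Hn; by exists a.
Qed.

Lemma K_model_Th (A : algebra L) : K A -> model (Th K) A.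
Proof. by move=> KA phi [_ Hk]; exact: Hk. Qed.

Lemma main_thm : exists T' : theory L, model_completion (Th K) T'.
Proof.
exists Tstar; split.
- by move=> phi [].
- move=> M N e HM HN he; split => // phi v.
  have [th [q H]] := QE phi.
  by rewrite (H M HM) (H N HN) (sat_emb _ he q).
- move=> phi sp up; split.
  + move=> H N HN; apply: HN; split => //; left; split => // A KA.
    exact: H (K_model_Th KA).
  + move=> H M HM.
    have [N [h [KN hh ECN]]] := ec_ext (ThK_K HM).
    exact: holds_down hh up (H N (EC_model KN ECN)).
- move=> M HM; split.
  + have [N [h [KN hh ECN]]] := ec_ext (ThK_K HM).
    by exists N, h; split => //; exact: EC_model.
  + move=> N1 N2 e1 e2 HN1 HN2 he1 he2 phi v.
    have [th [q H]] := QE phi.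
    by rewrite (H N1 HN1) (H N2 HN2) (sat_emb _ he1 q) (sat_emb _ he2 q).
Qed.

End Main.

Theorem proposition3p4 (L : language) (K : algebra L -> Prop) :
  has_constant L ->
  universal_class K ->
  amalgamation K -> var_projection K -> cons_model_ext K ->
  exists T' : theory L, model_completion (Th K) T'.
Proof. move=> hc HU HA HV HC; exact: main_thm. Qed.
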